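(* (Bicomplex Schwarz inequality.) Let $M$ be a free $\mathbb{T}$-module with a finite $\mathbb{T}$-basis, $V$ its associated complex vector space, and $(\cdot,\cdot)$ a bicomplex scalar product on $M$ which is hyperbolic positive and closed on $V$. Then for all $\widehat X,\widehat Y\in M$, $$|(\widehat X,\widehat Y)|\le\big|(\widehat X,\widehat X)^{1/2}(\widehat Y,\widehat Y)^{1/2}\big|\le\sqrt2\,\|\widehat X\|\,\|\widehat Y\|.$$
   Context: Bicomplex numbers: $\mathbb{T}=\{z_1+z_2\mathbf{i_2}: z_1,z_2\in\mathbb{C}(\mathbf{i_1})\}$, $\mathbb{C}(\mathbf{i_1})=\{x+y\mathbf{i_1}: x,y\in\mathbb{R}\}$, $\mathbf{i_1}^2=\mathbf{i_2}^2=-1$, $\mathbf{i_1}\mathbf{i_2}=\mathbf{i_2}\mathbf{i_1}=\mathbf{j}$, $\mathbf{j}^2=1$ (commutative). Hyperbolic numbers $\mathbb{D}=\{x+y\mathbf{j}:x,y\in\mathbb{R}\}$. Idempotents $\mathbf{e_1}=(1+\mathbf{j})/2$, $\mathbf{e_2}=(1-\mathbf{j})/2$. For $w=z_1+z_2\mathbf{i_2}\in\mathbb{T}$, $|w|=\sqrt{|z_1|^2+|z_2|^2}$ (Euclidean norm in $\mathbb{R}^4$). Conjugation: $(z_1+z_2\mathbf{i_2})^{\dagger_3}=\overline{z_1}-\overline{z_2}\mathbf{i_2}$. $\mathbb{D}^+=\{a\mathbf{e_1}+b\mathbf{e_2}: a,b\ge 0\}$, and $(a\mathbf{e_1}+b\mathbf{e_2})^{1/2}=\sqrt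 a\,\mathbf{e_1}+\sqrt b\,\mathbf{e_2}$. $M$ has $\mathbb{T}$-basis $\{\widehat m_1,\dots,\widehat m_n\}$, $V=\{\sum x_l\widehat m_l: x_l\in\mathbb{C}(\mathbf{i_1})\}$; for $\widehat X=\sum x_l\widehat m_l$ with $x_l=x_{1l}\mathbf{e_1}+x_{2l}\mathbf{e_2}$, $x_{kl}\in\mathbb{C}(\mathbf{i_1})$, put $\widehat X_{\mathbf{e_k}}=\sum_l x_{kl}\widehat m_l\in V$. A bicomplex scalar product is a map $(\cdot,\cdot):M\times M\to\mathbb{T}$ with: $(\widehat X,\widehat Y_1+\widehat Y_2)=(\widehat X,\widehat Y_1)+(\widehat X,\widehat Y_2)$; $(\widehat X,\alpha\widehat Y)=\alpha(\widehat X,\widehat Y)$ for $\alpha\in\mathbb{T}$; $(\widehat X,\widehat Y)=(\widehat Y,\widehat X)^{\dagger_3}$; $(\widehat X,\widehat X)=0\iff\widehat X=0$. Hyperbolic positive: $(\widehat X,\widehat X)\in\mathbb{D}^+$ for all $\widehat X$. Closed on $V$: $(\widehat X,\widehat Y)\in\mathbb{C}(\mathbf{i_1})$ for $\widehat X,\widehat Y\in V$. For $\widehat Z\in V$, $\|\widehat Z\|=(\widehat Z,\widehat Z)^{1/2}$; for $\widehat X\in M$, $\|\widehat X\|:=\big|(\widehat X,\widehat X)^{1/2}\big|=\big((\|\widehat X_{\mathbf{e_1}}\|^2+\|\widehat X_{\mathbf{e_2}}\|^2)/2\big)^{1/2}$. *)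

(* Defs.v *)
(* Bicomplex numbers over C(i1) := R[i], R a real closed field. *)
From HB Require Import structures.
From mathcomp Require Import all_boot all_order all_algebra.
From mathcomp Require Import complex.
Set Implicit Arguments. Unset Strict Implicit. Unset Printing Implicit Defensive.
Import Order.TTheory GRing.Theory Num.Theory.
Local Open Scope ring_scope.

Section Bicomplex.
Variable R : rcfType.
Local Notation C := (complex R).

(* w = z1 + z2 i2 is represented by the pair (z1, z2) *)
Definition bicomplex : Type := (C * C)%type.

Definition czero : C := Complex 0 0.
Definition cone : C := Complex 1 0.
Definition creal (x : R) : C := Complex x 0.
Definition cconj (z : C) : C := Complex (complex.Re z) (- complex.Im z).
Definition cnorm2 (z : C) : R := complex.Re z ^+ 2 + complex.Im z ^+ 2.

Definition bzero : bicomplex := (czero, czero).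
Definition badd (w v : bicomplex) : bicomplex := (w.1 + v.1, w.2 + v.2).
(* (z1 + z2 i2)(w1 + w2 i2) = (z1 w1 - z2 w2) + (z1 w2 + z2 w1) i2 *)
Definition bmul (w v : bicomplex) : bicomplex :=
  (w.1 * v.1 - w.2 * v.2, w.1 * v.2 + w.2 * v.1).
Definition breal (x : R) : bicomplex := (creal x, czero).
(* conjugation dagger_3 : (z1 + z2 i2)^{dagger_3} = conj z1 - conj z2 i2 *)
Definition bconj3 (w : bicomplex) : bicomplex := (cconj w.1, - cconj w.2).
Definition bnorm (w : bicomplex) : R := Num.sqrt (cnorm2 w.1 + cnorm2 w.2).

(* j = i1 i2, e1 = (1+j)/2, e2 = (1-j)/2 *)
Definition bj : bicomplex := (czero, Complex 0 1).
Definition be1 : bicomplex := (Complex (1/2) 0, Complex 0 (1/2)).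
Definition be2 : bicomplex := (Complex (1/2) 0, Complex 0 (-(1/2))).

Definition inDplus (w : bicomplex) : Prop :=
  exists a b : R, 0 <= a /\ 0 <= b /\
    w = badd (bmul (breal a) be1) (bmul (breal b) be2).

(* idempotent components: z1 + z2 i2 = (z1 - z2 i1) e1 + (z1 + z2 i1) e2 *)
Definition bcomp1 (w : bicomplex) : C := w.1 - Complex 0 1 * w.2.
Definition bcomp2 (w : bicomplex) : C := w.1 + Complex 0 1 * w.2.

(* hyperbolic square root: (a e1 + b e2)^{1/2} = sqrt a e1 + sqrt b e2
   (meaningful on D^+, where a = bcomp1 w, b = bcomp2 w are real) *)
Definition bsqrt (w : bicomplex) : bicomplex :=
  badd (bmul (breal (Num.sqrt (complex.Re (bcomp1 w)))) be1)
       (bmul (breal (Num.sqrt (complex.Re (bcomp2 w)))) be2).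

Definition inCi1 (w : bicomplex) : Prop := w.2 = czero.

(* M: free T-module with T-basis m_1..m_n, represented by coordinates *)
Definition bmod (n : nat) : Type := 'I_n -> bicomplex.
Definition mzero n : bmod n := fun _ => bzero.
Definition madd n (X Y : bmod n) : bmod n := fun l => badd (X l) (Y l).
Definition mscale n (a : bicomplex) (X : bmod n) : bmod n := fun l => bmul a (X l).
Definition inV n (X : bmod n) : Prop := forall l, inCi1 (X l).

Definition bicomplex_scalar_product n (ip : bmod n -> bmod n -> bicomplex) : Prop :=
  [/\ (forall X Y1 Y2, ip X (madd Y1 Y2) = badd (ip X Y1) (ip X Y2)),
      (forall X Y a, ip X (mscale a Y) = bmul a (ip X Y)),
      (forall X Y, ip X Y = bconj3 (ip Y X)) &
      (forall X, ip X X = bzero <-> X = @mzero n)].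

Definition hyperbolic_positive n (ip : bmod n -> bmod n -> bicomplex) : Prop :=
  forall X, inDplus (ip X X).

Definition closed_on_V n (ip : bmod n -> bmod n -> bicomplex) : Prop :=
  forall X Y, inV X -> inV Y -> inCi1 (ip X Y).

Definition mnorm n (ip : bmod n -> bmod n -> bicomplex) (X : bmod n) : R :=
  bnorm (bsqrt (ip X X)).

End Bicomplex.

(* Main.v *)
Require Import Defs.
From mathcomp Require Import all_boot all_order all_algebra.
From mathcomp Require Import complex ring lra.
Import Order.TTheory GRing.Theory Num.Theory.
Local Open Scope ring_scope.
Section S.
Variable R : rcfType.
Local Notation C := (complex R).

Ltac csolve := apply/eqP; rewrite eq_complex /=; apply/andP; split; apply/eqP; ring.
Ltac bdestr := repeat match goal with
  | u : bicomplex R |- _ => let a := fresh "a" in let b := fresh "b" in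
       let c := fresh "c" in let d := fresh "d" in case: u => [[a b] [c d]]
  | z : C |- _ => let a := fresh "a" in let b := fresh "b" in case: z => a b
  end.

Lemma bconj3K (w : bicomplex R) : bconj3 (bconj3 w) = w.
Proof. bdestr; rewrite /bconj3 /cconj /=; congr pair; csolve. Qed.
Lemma bconj3D (u v : bicomplex R) : bconj3 (badd u v) = badd (bconj3 u) (bconj3 v).
Proof. bdestr; rewrite /bconj3 /badd /cconj /=; congr pair; csolve. Qed.
Lemma bconj3M (u v : bicomplex R) : bconj3 (bmul u v) = bmul (bconj3 u) (bconj3 v).
Proof. bdestr; rewrite /bconj3 /bmul /cconj /=; congr pair; simpc; csolve. Qed.

Definition goodc (c : bicomplex R -> C) :=
  [/\ (forall u v, c (badd u v) = c u + c v),
      (forall u v, c (bmul u v) = c u * c v),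
      (forall u, c (bconj3 u) = (c u)^*%C),
      (forall z, c (z, czero R) = z) &
      (forall w, inDplus w -> complex.Im (c w) = 0 /\ 0 <= complex.Re (c w))].

Lemma good1 : goodc (@bcomp1 R).
Proof.
split.
- move=> u v; bdestr; rewrite /bcomp1 /badd /=; simpc; csolve.
- move=> u v; bdestr; rewrite /bcomp1 /bmul /=; simpc; csolve.
- move=> u; bdestr; rewrite /bcomp1 /bconj3 /cconj /=; simpc; csolve.
- move=> z; bdestr; rewrite /bcomp1 /czero /=; simpc; csolve.
- move=> w [a [b [ha [hb ->]]]]; rewrite /bcomp1 /badd /bmul /breal /be1 /be2 /creal /czero /=.
  simpc; rewrite /=; split; [done|lra].
Qed.
Lemma good2 : goodc (@bcomp2 R).
Proof.
split.
- move=> u v; bdestr; rewrite /bcomp2 /badd /=; simpc; csolve.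
- move=> u v; bdestr; rewrite /bcomp2 /bmul /=; simpc; csolve.
- move=> u; bdestr; rewrite /bcomp2 /bconj3 /cconj /=; simpc; csolve.
- move=> z; bdestr; rewrite /bcomp2 /czero /=; simpc; csolve.
- move=> w [a [b [ha [hb ->]]]]; rewrite /bcomp2 /badd /bmul /breal /be1 /be2 /creal /czero /=.
  simpc; rewrite /=; split; [done|lra].
Qed.

Lemma cnorm2M (z w : C) : cnorm2 (z * w) = cnorm2 z * cnorm2 w.
Proof. case: z => a b; case: w => c d; rewrite /cnorm2; simpc; rewrite /=; ring. Qed.

Lemma bnormE (w : bicomplex R) :
  bnorm w = Num.sqrt ((cnorm2 (bcomp1 w) + cnorm2 (bcomp2 w)) / 2).
Proof. case: w => [[a b] [c d]]; rewrite /bnorm /cnorm2 /bcomp1 /bcomp2 /=; simpc; rewrite /=; congr Num.sqrt; field; rewrite ?pnatr_eq0 //=. Qed.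

Lemma c1sqrt (w : bicomplex R) : bcomp1 (bsqrt w) = Complex (Num.sqrt (complex.Re (bcomp1 w))) 0.
Proof.
rewrite /bsqrt; set a := Num.sqrt _; set b := Num.sqrt _.
rewrite /bcomp1 /badd /bmul /breal /be1 /be2 /creal /czero /=; simpc; rewrite /=.
apply/eqP; rewrite eq_complex /=; apply/andP; split; apply/eqP; field; rewrite ?pnatr_eq0 //=.
Qed.
Lemma c2sqrt (w : bicomplex R) : bcomp2 (bsqrt w) = Complex (Num.sqrt (complex.Re (bcomp2 w))) 0.
Proof.
rewrite /bsqrt; set a := Num.sqrt _; set b := Num.sqrt _.
rewrite /bcomp2 /badd /bmul /breal /be1 /be2 /creal /czero /=; simpc; rewrite /=.
apply/eqP; rewrite eq_complex /=; apply/andP; split; apply/eqP; field; rewrite ?pnatr_eq0 //=.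
Qed.

Variable n : nat.
Variable ip : bmod R n -> bmod R n -> bicomplex R.
Hypothesis Hsp : bicomplex_scalar_product ip.
Hypothesis Hpos : hyperbolic_positive ip.

Lemma ipDl U V W : ip (madd U V) W = badd (ip U W) (ip V W).
Proof. case: Hsp => HD HZ HC _. by rewrite HC HD bconj3D -!HC. Qed.
Lemma ipZl a U W : ip (mscale a U) W = bmul (bconj3 a) (ip U W).
Proof. case: Hsp => HD HZ HC _. by rewrite HC HZ bconj3M -!HC. Qed.

Lemma ipZZ X Y t : ip (madd X (mscale t Y)) (madd X (mscale t Y)) =
  badd (badd (ip X X) (bmul t (ip X Y)))
       (bmul (bconj3 t) (badd (bconj3 (ip X Y)) (bmul t (ip Y Y)))).
Proof.
case: Hsp => HD HZ HC _.
by rewrite ipDl ipZl !HD !HZ (HC Y X).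
Qed.

Lemma CS c (hc : goodc c) X Y :
  cnorm2 (c (ip X Y)) <= complex.Re (c (ip X X)) * complex.Re (c (ip Y Y)).
Proof.
case: hc => cD cM cJ cz cP.
have key : forall z, 0 <= complex.Re (c (ip X X) + z * c (ip X Y) +
     z^*%C * ((c (ip X Y))^*%C + z * c (ip Y Y))).
  move=> z; have [_ h] := cP _ (Hpos (madd X (mscale (z, czero R) Y))).
  by move: h; rewrite ipZZ !(cD, cM, cJ, cz).
have [iP pP] := cP _ (Hpos X); have [iQ pQ] := cP _ (Hpos Y).
move: key iP pP iQ pQ; rewrite /cnorm2.
case: (c (ip X X)) => p pi; case: (c (ip Y Y)) => q qi; case: (c (ip X Y)) => ar ai.
rewrite /= => key ip0 hp iq0 hq; subst pi qi.
set N := ar ^+ 2 + ai ^+ 2.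
have H : forall s, 0 <= p - 2 * s * N + s ^+ 2 * N * q.
  move=> s; move: (key (Complex (- s * ar) (s * ai))); simpc; rewrite /=.
  by congr (_ <= _); rewrite /N; ring.
have hN : 0 <= N by rewrite /N; nra.
have [q0|qn0] := eqVneq q 0.
  subst q; rewrite mulr0 leNgt; apply/negP => Npos.
  have := H ((p + 1) / (2 * N)).
  have -> : 2 * ((p + 1) / (2 * N)) * N = p + 1.
    field; rewrite ?pnatr_eq0 ?(gt_eqF Npos) //=.
  rewrite mulr0 addr0; lra.
have qpos : 0 < q by rewrite lt_def qn0 hq.
have := H q^-1.
have -> : q^-1 ^+ 2 * N * q = q^-1 * N by field.
have -> : 2 * q^-1 * N = 2 * (q^-1 * N) by ring.
have EN : N = q * (q^-1 * N) by field.
move=> Hu; rewrite [X in X <= _]EN [p * q]mulrC; apply: ler_wpM2l => //; lra.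
Qed.
Lemma cnorm2_sqrt (x : R) : 0 <= x -> cnorm2 (Complex (Num.sqrt x) 0) = x.
Proof. by move=> hx; rewrite /cnorm2 /= sqr_sqrtr // expr0n addr0. Qed.
End S.

Theorem mainTheorem11 (R : rcfType) (n : nat)
    (ip : bmod R n -> bmod R n -> bicomplex R)
    (Hsp : bicomplex_scalar_product ip)
    (Hpos : hyperbolic_positive ip)
    (Hclosed : closed_on_V ip) :
  forall X Y : bmod R n,
    bnorm (ip X Y) <= bnorm (bmul (bsqrt (ip X X)) (bsqrt (ip Y Y))) /\
    bnorm (bmul (bsqrt (ip X X)) (bsqrt (ip Y Y)))
      <= Num.sqrt 2 * mnorm ip X * mnorm ip Y.
Proof.
move=> X Y.
have CS1 := @CS R n ip Hsp Hpos _ (good1 R) X Y.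
have CS2 := @CS R n ip Hsp Hpos _ (good2 R) X Y.
have [g1D g1M _ _ g1P] := good1 R.
have [g2D g2M _ _ g2P] := good2 R.
have [_ hp1] := g1P _ (Hpos X); have [_ hq1] := g1P _ (Hpos Y).
have [_ hp2] := g2P _ (Hpos X); have [_ hq2] := g2P _ (Hpos Y).
rewrite /mnorm !bnormE g1M g2M !cnorm2M !c1sqrt !c2sqrt !cnorm2_sqrt //.
move: CS1 CS2 hp1 hq1 hp2 hq2.
move: (complex.Re (bcomp1 (ip X X))) (complex.Re (bcomp1 (ip Y Y)))
      (complex.Re (bcomp2 (ip X X))) (complex.Re (bcomp2 (ip Y Y)))
      (cnorm2 (bcomp1 (ip X Y))) (cnorm2 (bcomp2 (ip X Y))) => p1 q1 p2 q2 a1 a2.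
move=> h1 h2 hp1 hq1 hp2 hq2.
split.
  rewrite ler_sqrt; [lra | nra].
rewrite -!sqrtrM ?ler_sqrt; [nra | nra | lra | lra].
Qed.
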